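(* Fix $x\in[0,1]$. The evaluation operator $E:\mathcal C^0([0,1])\to\mathbb R$, $E(\eta)=\varphi_\eta(x)$, is differentiable, with derivative $$\frac{\partial\varphi(x)}{\partial\eta}(\Delta\eta)=\left(\frac{\int_0^x\left[\int_0^s\Delta\eta\right]e^{\int_0^s\eta}ds}{\int_0^xe^{\int_0^s\eta}ds}-\frac{\int_0^1\left[\int_0^s\Delta\eta\right]e^{\int_0^s\eta}ds}{\int_0^1e^{\int_0^s\eta}ds}\right)\varphi(x),$$ where $\varphi=\varphi_\eta$. Moreover there exists $\varepsilon_0>0$ such that for all $\varepsilon\in(0,\varepsilon_0)$, if $\|D^2\varphi\|_{\mathcal C^0}<\varepsilon$ then $$\tfrac18\min\{\varphi(x),1-\varphi(x)\}\le\left|\frac{\partial\varphi(x)}{\partial\eta}\right|\le2\min\{\varphi(x),1-\varphi(x)\}.$$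
   Context: For $\eta\in\mathcal C^0([0,1])$, $\varphi_\eta(x)=\dfrac{\int_0^xe^{\int_0^s\eta(t)dt}ds}{\int_0^1e^{\int_0^s\eta(t)dt}ds}$ is the unique orientation-preserving diffeomorphism of $[0,1]$ with nonlinearity $N\varphi_\eta=D^2\varphi_\eta/D\varphi_\eta=\eta$; this identifies $\mathrm{Diff}^2_+([0,1])$ with $\mathcal C^0([0,1])$. $\left|\partial\varphi(x)/\partial\eta\right|$ denotes the operator norm of the derivative as a linear functional on $\mathcal C^0([0,1])$. *)

(* Defs.v *)
From HB Require Import structures.
From mathcomp Require Import all_boot all_order all_algebra.
From mathcomp Require Import all_classical all_reals all_analysis.
Set Implicit Arguments. Unset Strict Implicit. Unset Printing Implicit Defensive.
Import Order.TTheory GRing.Theory Num.Theory.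
Import numFieldNormedType.Exports.
Local Open Scope classical_set_scope.
Local Open Scope ring_scope.

Section Defs.
Variable R : realType.
Implicit Types (f eta Deta : R -> R) (a b x : R).

(* elements of C^0([0,1]) are represented by functions R -> R continuous on
   [0,1]; only their values on [0,1] matter below *)
Definition cont01 f : Prop := {within `[0 : R, 1], continuous f}.

Definition supnorm01 f : R := sup [set `|f t| | t in `[0 : R, 1]].

Definition integ a b f : R := \int[lebesgue_measure]_(s in `[a, b]) f s.

Definition expint eta (s : R) : R := expR (integ 0 s eta).

Definition phi eta x : R := integ 0 x (expint eta) / integ 0 1 (expint eta).

(* the claimed derivative (d varphi(x) / d eta)(Deta); note x/0 = 0 in
   MathComp, so at x = 0 this is 0 = the true derivative *)
Definition dphi eta x Deta : R :=
  (integ 0 x (fun s => integ 0 s Deta * expint eta s) / integ 0 x (expint eta)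
   - integ 0 1 (fun s => integ 0 s Deta * expint eta s) / integ 0 1 (expint eta))
  * phi eta x.

Definition opnorm01 (L : (R -> R) -> R) : R :=
  sup [set `|L D| | D in [set D | cont01 D /\ supnorm01 D <= 1]].

(* || D^2 varphi ||_{C^0}: sup of |varphi''| over ]0,1[ (equal to the sup
   over [0,1] by continuity of varphi'' on [0,1]) *)
Definition D2norm01 (g : R -> R) : R :=
  sup [set `|(derive1 (derive1 g)) t| | t in `]0 : R, 1[].

End Defs.

(* Main.v *)
Require Import Defs.
From HB Require Import structures.
From mathcomp Require Import all_boot all_order all_algebra.
From mathcomp Require Import all_classical all_reals all_analysis.
From mathcomp Require Import ring lra.
Import Order.TTheory GRing.Theory Num.Theory.
Import numFieldNormedType.Exports.
Set Implicit Arguments. Unset Strict Implicit. Unset Printing Implicit Defensive.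
Local Open Scope classical_set_scope.
Local Open Scope ring_scope.

Section Basics.
Context {R : realType}.
Notation mu := (@lebesgue_measure R).
Implicit Types (f g h eta D : R -> R).

Lemma sub01 (x : R) : 0 <= x -> x <= 1 -> `[0, x] `<=` `[0 : R, 1].
Proof. by move=> x0 x1; apply: subset_itvScc; rewrite bnd_simp. Qed.

Lemma cont01_sub f x : cont01 f -> 0 <= x -> x <= 1 -> {within `[0, x], continuous f}.
Proof. by move=> cf x0 x1; apply: continuous_subspaceW cf; exact: sub01. Qed.

Lemma integ_int x f : cont01 f -> 0 <= x -> x <= 1 -> mu.-integrable `[0, x] (EFin \o f).
Proof.
move=> cf x0 x1; apply: continuous_compact_integrable; first exact: segment_compact.
exact: cont01_sub.
Qed.

Lemma cont01D f g : cont01 f -> cont01 g -> cont01 (fun t => f t + g t).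
Proof. by move=> cf cg x; apply: continuousD; [exact: cf|exact: cg]. Qed.

Lemma cont01M f g : cont01 f -> cont01 g -> cont01 (fun t => f t * g t).
Proof. by move=> cf cg x; apply: continuousM; [exact: cf|exact: cg]. Qed.

Lemma cont01N f : cont01 f -> cont01 (fun t => - f t).
Proof. by move=> cf x; apply: continuousN; exact: cf. Qed.

Lemma cont01_cst (c : R) : cont01 (fun _ => c).
Proof. by move=> x; apply: cst_continuous. Qed.

Lemma cont01_id : cont01 (fun t : R => t).
Proof. by apply: continuous_subspaceT => x; exact: cvg_id. Qed.

Lemma cont01_comp f (k : R -> R) : cont01 f -> continuous k -> cont01 (fun t => k (f t)).
Proof. by move=> cf ck x; apply: continuous_comp; [exact: cf| exact: ck]. Qed.

Lemma cont01_integ f : cont01 f -> cont01 (fun s => integ 0 s f).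
Proof.
move=> cf; have := @parameterized_integral_continuous R 0 1 f ler01 (integ_int cf ler01 (lexx _)).
by [].
Qed.


Lemma integD x f g : cont01 f -> cont01 g -> 0 <= x -> x <= 1 ->
  integ 0 x (fun t => f t + g t) = integ 0 x f + integ 0 x g.
Proof. by move=> cf cg x0 x1; rewrite /integ RintegralD//; exact: integ_int. Qed.

Lemma integB x f g : cont01 f -> cont01 g -> 0 <= x -> x <= 1 ->
  integ 0 x (fun t => f t - g t) = integ 0 x f - integ 0 x g.
Proof. by move=> cf cg x0 x1; rewrite /integ RintegralB//; exact: integ_int. Qed.

Lemma integZ x (c : R) f : cont01 f -> 0 <= x -> x <= 1 ->
  integ 0 x (fun t => c * f t) = c * integ 0 x f.
Proof. by move=> cf x0 x1; rewrite /integ RintegralZl//; exact: integ_int. Qed.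

Lemma integ_ext x f g : (forall t, 0 <= t -> t <= x -> f t = g t) ->
  integ 0 x f = integ 0 x g.
Proof.
move=> e; rewrite /integ; apply: eq_Rintegral => t; rewrite inE /= in_itv /=.
by move=> /andP[t0 tx]; rewrite e.
Qed.

Lemma le_integ x f g : cont01 f -> cont01 g -> 0 <= x -> x <= 1 ->
  (forall t, 0 <= t -> t <= x -> f t <= g t) -> integ 0 x f <= integ 0 x g.
Proof.
move=> cf cg x0 x1 fg; rewrite /integ; apply: le_Rintegral => //; try exact: integ_int.
by move=> t /=; rewrite in_itv /= => /andP[t0 tx]; exact: fg.
Qed.

Lemma integ_ge0 x f : (forall t, 0 <= t -> t <= x -> 0 <= f t) -> 0 <= integ 0 x f.
Proof.
move=> fg; rewrite /integ; apply: Rintegral_ge0 => t /=.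
by rewrite in_itv /= => /andP[t0 tx]; exact: fg.
Qed.

Lemma integ_cst x (c : R) : 0 <= x -> integ 0 x (fun _ => c) = c * x.
Proof.
move=> x0; rewrite /integ Rintegral_cst//.
have := @lebesgue_measure_itv R `[0, x]; rewrite /= lte_fin => ->.
case: ltP => [xp|]; first by rewrite /= subr0.
by move=> xle; have -> : x = 0 by apply/eqP; rewrite eq_le xle x0.
Qed.

Lemma integ00 f : integ 0 0 f = 0.
Proof. by rewrite /integ set_itv1 Rintegral_set1. Qed.

Lemma integ_mono x h : cont01 h -> 0 <= x -> x <= 1 ->
  (forall t, 0 <= t -> t <= 1 -> 0 <= h t) -> integ 0 x h <= integ 0 1 h.
Proof.
move=> ch x0 x1 h0; rewrite -subr_ge0 /integ.
rewrite (@Rintegral_itvB R h (BLeft 0) (BRight 1) x) ?bnd_simp//; last exact: integ_int.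
apply: Rintegral_ge0 => t /=; rewrite in_itv /= => /andP[xt t1].
by apply: h0 => //; rewrite (le_trans x0)// ltW.
Qed.

Lemma integ_abs x f (M : R) : cont01 f -> 0 <= x -> x <= 1 ->
  (forall t, 0 <= t -> t <= x -> `|f t| <= M) -> `|integ 0 x f| <= M * x.
Proof.
move=> cf x0 x1 fM; rewrite /integ; apply: le_trans; first by apply: le_normr_Rintegral => //; exact: integ_int.
rewrite -integ_cst//; apply: le_integ => //; [|exact: cont01_cst].
exact: cont01_comp cf (@norm_continuous _ R^o).
Qed.


Lemma cont01_abs f : cont01 f -> cont01 (fun t => `|f t|).
Proof. by move=> cf; exact: cont01_comp cf (@norm_continuous _ R^o). Qed.

Lemma cont01_bnd f : cont01 f -> exists M, forall t, 0 <= t -> t <= 1 -> `|f t| <= M.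
Proof.
move=> cf; have [c c01 cmax] := EVT_max ler01 (cont01_abs cf).
by exists `|f c| => t t0 t1; apply: cmax; rewrite in_itv /= t0 t1.
Qed.

Lemma supnorm_ge f t : cont01 f -> 0 <= t -> t <= 1 -> `|f t| <= supnorm01 f.
Proof.
move=> cf t0 t1; have [M hM] := cont01_bnd cf.
apply: ub_le_sup; last by exists t => //=; rewrite in_itv /= t0 t1.
by exists M => y [s /= + <-]; rewrite in_itv /= => /andP[s0 s1]; exact: hM.
Qed.

Lemma supnorm_ge0 f : cont01 f -> 0 <= supnorm01 f.
Proof. by move=> cf; apply: le_trans (supnorm_ge cf (lexx 0) ler01). Qed.


Lemma integ_abs_le x f h : cont01 f -> cont01 h -> 0 <= x -> x <= 1 ->
  (forall t, 0 <= t -> t <= x -> `|f t| <= h t) -> `|integ 0 x f| <= integ 0 x h.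
Proof.
move=> cf ch x0 x1 fh; rewrite /integ; apply: le_trans; first by apply: le_normr_Rintegral => //; exact: integ_int.
by apply: le_integ => //; exact: cont01_abs.
Qed.

Lemma exp_taylor (u : R) : `|u| <= 1/2 -> 0 <= expR u - 1 - u <= 2 * u ^+ 2.
Proof.
move=> hu; have := expR_ge1Dx u; have := expR_ge1Dx (- u).
rewrite expRN => h1 h2.
have hu1 : 1/2 <= 1 - u by move: hu; rewrite ler_norml => /andP[]; lra.
have e0 := expR_gt0 u.
have h3 : expR u * (1 - u) <= 1.
  have := h1; rewrite -(ler_pM2l e0) mulfV //; exact: lt0r_neq0.
apply/andP; split; first lra.
nra.
Qed.


Lemma frechet_alg (Zx Z1 Ax A1 Rx R1 d : R) :
  0 <= Zx -> Zx <= Z1 -> 0 < Z1 -> 0 <= d -> d <= 1/4 ->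
  `|Ax| <= d * Zx -> `|A1| <= d * Z1 -> `|Rx| <= 2 * d^+2 * Zx -> `|R1| <= 2 * d^+2 * Z1 ->
  `|(Zx + Ax + Rx) / (Z1 + A1 + R1) - Zx / Z1 - (Ax / Zx - A1 / Z1) * (Zx / Z1)| <= 14 * d^+2.
Proof.
move=> Zx0 ZxZ1 Z10 d0 d1.
have [->|Zxp] := eqVneq Zx 0.
  move=> hAx hA1 hRx hR1.
  have -> : Ax = 0 by apply/eqP; rewrite -normr_le0; move: hAx; rewrite mulr0.
  have -> : Rx = 0 by apply/eqP; rewrite -normr_le0; move: hRx; rewrite mulr0.
  rewrite !(addr0, mul0r, mulr0, subr0, normr0); nra.
move=> hAx hA1 hRx hR1.
have Zxp' : 0 < Zx by rewrite lt_neqAle eq_sym Zxp Zx0.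
have d2 : d^+2 <= d / 4 by rewrite expr2; nra.
have hA1' : - (d * Z1) <= A1 <= d * Z1 by rewrite -ler_norml.
have hR1' : - (2 * d^+2 * Z1) <= R1 <= 2 * d^+2 * Z1 by rewrite -ler_norml.
have N1p : Z1 / 2 <= Z1 + A1 + R1.
  move: hA1' hR1' => /andP[a1 a2] /andP[r1 r2]; nra.
have N10 : Z1 + A1 + R1 != 0 by apply: lt0r_neq0; apply: lt_le_trans N1p; lra.
set num := Z1^+2 * Rx - Zx * Z1 * R1 - (Ax * Z1 - A1 * Zx) * (A1 + R1).
have -> : (Zx + Ax + Rx) / (Z1 + A1 + R1) - Zx / Z1 - (Ax / Zx - A1 / Z1) * (Zx / Z1)
   = num / (Z1^+2 * (Z1 + A1 + R1)).
  by rewrite /num; field; rewrite Zxp N10 (lt0r_neq0 Z10).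
have den : Z1^+3 / 2 <= Z1^+2 * (Z1 + A1 + R1).
  have -> : Z1^+3 / 2 = Z1^+2 * (Z1 / 2) by ring.
  by rewrite ler_pM2l ?exprn_gt0.
have dp : 0 < Z1^+2 * (Z1 + A1 + R1) by apply: lt_le_trans den; rewrite divr_gt0 ?exprn_gt0.
rewrite normrM normfV (gtr0_norm dp) ler_pdivrMr //.
have Z10' := ltW Z10.
have e1 : `|num| <= Z1^+2 * `|Rx| + Zx * Z1 * `|R1| + (`|Ax| * Z1 + `|A1| * Zx) * (`|A1| + `|R1|).
  rewrite /num; apply: le_trans (ler_normB _ _) _.
  have q1 : `|Z1 ^+ 2 * Rx - Zx * Z1 * R1| <= Z1^+2 * `|Rx| + Zx * Z1 * `|R1|.
    apply: le_trans (ler_normB _ _) _.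
    by rewrite !normrM (ger0_norm Z10') (ger0_norm Zx0) expr2.
  have q2 : `|(Ax * Z1 - A1 * Zx) * (A1 + R1)| <= (`|Ax| * Z1 + `|A1| * Zx) * (`|A1| + `|R1|).
    rewrite normrM; apply: ler_pM => //; last exact: ler_normD.
    by apply: le_trans (ler_normB _ _) _; rewrite !normrM (ger0_norm Z10') (ger0_norm Zx0).
  lra.
set ax := `|Ax| in hAx e1; set a1 := `|A1| in hA1 e1; set rx := `|Rx| in hRx e1; set r1 := `|R1| in hR1 e1.
have ax0 : 0 <= ax := normr_ge0 _. have a10 : 0 <= a1 := normr_ge0 _. have rx0 : 0 <= rx := normr_ge0 _. have r10 : 0 <= r1 := normr_ge0 _.
have dd : 0 <= d^+2 by rewrite sqr_ge0.
have p1 : Z1^+2 * rx <= Z1^+2 * (2 * d^+2 * Z1).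
  rewrite ler_wpM2l ?sqr_ge0 //; apply: le_trans hRx _; rewrite ler_wpM2l //; nra.
have z2 : Zx * Z1 <= Z1 * Z1 by rewrite ler_wpM2r.
have p2 := ler_pM (mulr_ge0 Zx0 Z10') r10 z2 hR1.
have p3 : ax * Z1 + a1 * Zx <= 2 * d * Z1^+2 by nra.
have p4 : a1 + r1 <= 3/2 * d * Z1 by nra.
have p5 : (ax * Z1 + a1 * Zx) * (a1 + r1) <= (2 * d * Z1^+2) * (3/2 * d * Z1).
  apply: ler_pM => //; nra.
have den2 : Z1^+3 <= 2 * (Z1^+2 * (Z1 + A1 + R1)) by lra.
have p6 : 14 * d^+2 * Z1^+3 <= 14 * d^+2 * (2 * (Z1^+2 * (Z1 + A1 + R1))).
  by rewrite ler_wpM2l // mulr_ge0.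
have q1 : (2 * d * Z1 ^+ 2) * (3 / 2 * d * Z1) = 3 * d^+2 * Z1^+3 by field.
have q2 : Z1^+2 * (2 * d^+2 * Z1) = 2 * d^+2 * Z1^+3 by ring.
have q3 : Z1 * Z1 * (2 * d^+2 * Z1) = 2 * d^+2 * Z1^+3 by ring.
lra.
Qed.


End Basics.

Section Eta.
Context {R : realType}.
Notation mu := (@lebesgue_measure R).
Implicit Types (f g h eta D : R -> R).

Lemma g_cont eta : cont01 eta -> cont01 (expint eta).
Proof. by move=> ce; exact: cont01_comp (cont01_integ ce) (@continuous_expR R). Qed.

Lemma g_pos eta s : 0 < expint eta s.
Proof. exact: expR_gt0. Qed.

Lemma Z_ge0 eta x : 0 <= integ 0 x (expint eta).
Proof. by apply: integ_ge0 => t _ _; exact/ltW/g_pos. Qed.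

Lemma Z_le eta x : cont01 eta -> 0 <= x -> x <= 1 ->
  integ 0 x (expint eta) <= integ 0 1 (expint eta).
Proof. by move=> ce x0 x1; apply: integ_mono => // [|t _ _]; [exact: g_cont|exact/ltW/g_pos]. Qed.

Lemma Z1_gt0 eta : cont01 eta -> 0 < integ 0 1 (expint eta).
Proof.
move=> ce; have [c c01 cmin] := EVT_min ler01 (g_cont ce).
have h : integ 0 1 (fun _ => expint eta c) <= integ 0 1 (expint eta).
  apply: le_integ; [exact: cont01_cst|exact: g_cont ce|exact: ler01|exact: lexx|].
  by move=> t t0 t1; apply: cmin; rewrite in_itv /= t0 t1.
apply: lt_le_trans h; rewrite integ_cst ?mulr1; [exact: g_pos|exact: ler01].
Qed.

Definition Aint eta D x := integ 0 x (fun s => integ 0 s D * expint eta s).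

Lemma FD_cont eta D : cont01 eta -> cont01 D -> cont01 (fun s => integ 0 s D * expint eta s).
Proof. by move=> ce cD; apply: cont01M; [exact: cont01_integ|exact: g_cont]. Qed.

Lemma F_bnd D (d : R) s : cont01 D -> (forall t, 0 <= t -> t <= 1 -> `|D t| <= d) ->
  0 <= s -> s <= 1 -> `|integ 0 s D| <= d.
Proof.
move=> cD hD s0 s1; have d0 : 0 <= d by apply: le_trans (hD 0 (lexx _) ler01).
have h : `|integ 0 s D| <= d * s.
  by apply: integ_abs => // t t0 ts; apply: hD => //; exact: le_trans s1.
by apply: le_trans h _; rewrite ler_piMr.
Qed.

Lemma A_bnd eta D (d : R) x : cont01 eta -> cont01 D ->
  (forall t, 0 <= t -> t <= 1 -> `|D t| <= d) -> 0 <= x -> x <= 1 ->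
  `|Aint eta D x| <= d * integ 0 x (expint eta).
Proof.
move=> ce cD hD x0 x1.
have cg := g_cont ce.
rewrite /Aint -(integZ d cg x0 x1).
apply: integ_abs_le; [exact: FD_cont|apply: cont01M; [exact: cont01_cst|exact: cg]|exact: x0|exact: x1|].
move=> t t0 tx; rewrite normrM (gtr0_norm (g_pos _ _)) ler_wpM2r //; first exact/ltW/g_pos.
by apply: F_bnd => //; exact: le_trans x1.
Qed.

Lemma A_diff eta D (d : R) x : cont01 eta -> cont01 D ->
  (forall t, 0 <= t -> t <= 1 -> `|D t| <= d) -> 0 <= x -> x <= 1 ->
  `|Aint eta D 1 - Aint eta D x| <= d * (integ 0 1 (expint eta) - integ 0 x (expint eta)).
Proof.
move=> ce cD hD x0 x1.
have cg := g_cont ce; have cF := FD_cont ce cD.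
have key : forall sg : R, sg = 1 \/ sg = -1 ->
    sg * (Aint eta D x) + d * integ 0 x (expint eta) <=
    sg * (Aint eta D 1) + d * integ 0 1 (expint eta).
  move=> sg hsg.
  have ch : cont01 (fun s => sg * (integ 0 s D * expint eta s) + d * expint eta s).
    by apply: cont01D; apply: cont01M => //; exact: cont01_cst.
  rewrite /Aint -(integZ sg cF x0 x1) -(integZ sg cF ler01 (lexx _)).
  rewrite -(integZ d cg x0 x1) -(integZ d cg ler01 (lexx _)).
  have cF' : cont01 (fun s => sg * (integ 0 s D * expint eta s)) by apply: cont01M => //; exact: cont01_cst.
  have cg' : cont01 (fun s => d * expint eta s) by apply: cont01M => //; exact: cont01_cst.
  rewrite -(integD cF' cg' x0 x1) -(integD cF' cg' ler01 (lexx _)).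
  apply: (integ_mono ch x0 x1) => t t0 t1.
  have := F_bnd cD hD t0 t1; have gp := g_pos eta t.
  rewrite mulrA -mulrDl; move=> hF; apply: mulr_ge0; last exact: ltW.
  move: hF; rewrite ler_norml => /andP[h1 h2].
  by case: hsg => ->; lra.
have k1 := key 1 (or_introl erefl); have k2 := key (-1) (or_intror erefl).
rewrite ler_norml; apply/andP; split; lra.
Qed.

Lemma dphiE eta x D : dphi eta x D =
  (Aint eta D x / integ 0 x (expint eta) - Aint eta D 1 / integ 0 1 (expint eta)) * phi eta x.
Proof. by []. Qed.

Lemma integ_lin s (a : R) D1 D2 : cont01 D1 -> cont01 D2 -> 0 <= s -> s <= 1 ->
  integ 0 s (fun t => a * D1 t + D2 t) = a * integ 0 s D1 + integ 0 s D2.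
Proof.
move=> c1 c2 s0 s1.
have c1' : cont01 (fun t => a * D1 t) by apply: cont01M => //; exact: cont01_cst.
by rewrite (integD c1' c2 s0 s1) (integZ a c1 s0 s1).
Qed.

Lemma A_lin eta y (a : R) D1 D2 : cont01 eta -> cont01 D1 -> cont01 D2 -> 0 <= y -> y <= 1 ->
  Aint eta (fun t => a * D1 t + D2 t) y = a * Aint eta D1 y + Aint eta D2 y.
Proof.
move=> ce c1 c2 y0 y1.
rewrite /Aint (@integ_ext _ y _ (fun s => a * (integ 0 s D1 * expint eta s) + integ 0 s D2 * expint eta s)); last first.
  move=> t t0 ty; rewrite integ_lin //; [ring|exact: le_trans y1].
have cF1 := FD_cont ce c1; have cF2 := FD_cont ce c2.
have cF1' : cont01 (fun s => a * (integ 0 s D1 * expint eta s)) by apply: cont01M => //; exact: cont01_cst.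
by rewrite (integD cF1' cF2 y0 y1) (integZ a cF1 y0 y1).
Qed.

Lemma ratio_bnd (A Z d : R) : 0 <= Z -> 0 <= d -> `|A| <= d * Z -> `|A / Z| <= d.
Proof.
move=> Z0 d0 hA; have [->|Zn] := eqVneq Z 0; first by rewrite invr0 mulr0 normr0.
have Zp : 0 < Z by rewrite lt_neqAle eq_sym Zn Z0.
by rewrite normrM normfV (gtr0_norm Zp) ler_pdivrMr.
Qed.

Definition Rrem eta D y :=
  integ 0 y (fun s => expint eta s * (expR (integ 0 s D) - 1 - integ 0 s D)).

Lemma Rrem_cont eta D : cont01 eta -> cont01 D ->
  cont01 (fun s => expint eta s * (expR (integ 0 s D) - 1 - integ 0 s D)).
Proof.
move=> ce cD; have cF := cont01_integ cD.
apply: cont01M; first exact: g_cont.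
apply: cont01D; last exact: cont01N.
apply: cont01D; last exact: cont01_cst.
exact: cont01_comp cF (@continuous_expR R).
Qed.

Lemma N_decomp eta D y : cont01 eta -> cont01 D -> 0 <= y -> y <= 1 ->
  integ 0 y (expint (fun t => eta t + D t)) =
  integ 0 y (expint eta) + Aint eta D y + Rrem eta D y.
Proof.
move=> ce cD y0 y1.
rewrite (@integ_ext _ y _ (fun s => (expint eta s + integ 0 s D * expint eta s) +
   expint eta s * (expR (integ 0 s D) - 1 - integ 0 s D))); last first.
  move=> t t0 ty; rewrite /expint (integD ce cD t0 (le_trans ty y1)) expRD; ring.
have cg := g_cont ce; have cF := FD_cont ce cD.
rewrite (integD (cont01D cg cF) (Rrem_cont ce cD) y0 y1) (integD cg cF y0 y1).
by [].
Qed.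

Lemma Rrem_bnd eta D (d : R) y : cont01 eta -> cont01 D ->
  (forall t, 0 <= t -> t <= 1 -> `|D t| <= d) -> d <= 1/2 -> 0 <= y -> y <= 1 ->
  `|Rrem eta D y| <= 2 * d^+2 * integ 0 y (expint eta).
Proof.
move=> ce cD hD d1 y0 y1; have cg := g_cont ce.
rewrite /Rrem -(integZ (2 * d^+2) cg y0 y1).
apply: integ_abs_le; [exact: Rrem_cont|apply: cont01M; [exact: cont01_cst|exact: cg]|exact: y0|exact: y1|].
move=> t t0 ty; have t1 := le_trans ty y1.
have hF := F_bnd cD hD t0 t1.
have := exp_taylor (le_trans hF d1) => /andP[e1 e2].
rewrite normrM (gtr0_norm (g_pos _ _)) (ger0_norm e1) mulrC ler_wpM2r //; first exact/ltW/g_pos.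
apply: le_trans e2 _; rewrite ler_pM2l //.
by move: hF; rewrite ler_norml => /andP[h1 h2]; nra.
Qed.

Lemma part1 eta x : 0 <= x -> x <= 1 -> cont01 eta ->
     (forall (a : R) (D1 D2 : R -> R), cont01 D1 -> cont01 D2 ->
        dphi eta x (fun t => a * D1 t + D2 t) = a * dphi eta x D1 + dphi eta x D2) /\
     (exists C : R, forall D : R -> R, cont01 D ->
        `|dphi eta x D| <= C * supnorm01 D) /\
     (forall e : R, 0 < e -> exists d : R, 0 < d /\
        forall D : R -> R, cont01 D -> supnorm01 D < d ->
          `|phi (fun t => eta t + D t) x - phi eta x - dphi eta x D|
            <= e * supnorm01 D).
Proof.
move=> x0 x1 ce.
have Zx0 := Z_ge0 eta x; have ZxZ1 := Z_le ce x0 x1; have Z1p := Z1_gt0 ce.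
split.
  move=> a D1 D2 c1 c2; rewrite !dphiE !A_lin //; ring.
split.
  exists (2 * `|phi eta x|) => D cD.
  have hD : forall t, 0 <= t -> t <= 1 -> `|D t| <= supnorm01 D by move=> t t0 t1; exact: supnorm_ge.
  have d0 := supnorm_ge0 cD.
  have r1 := ratio_bnd Zx0 d0 (A_bnd ce cD hD x0 x1).
  have r2 := ratio_bnd (ltW Z1p) d0 (A_bnd ce cD hD ler01 (lexx _)).
  rewrite dphiE normrM.
  have := ler_normB (Aint eta D x / integ 0 x (expint eta)) (Aint eta D 1 / integ 0 1 (expint eta)).
  move=> hB; have hp := normr_ge0 (phi eta x).
  have : `|Aint eta D x / integ 0 x (expint eta) - Aint eta D 1 / integ 0 1 (expint eta)| <= 2 * supnorm01 D by lra.
  by move=> h; rewrite mulrAC ler_wpM2r.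
move=> e e0.
exists (Num.min (1/4) (e / 14)); split; first by rewrite lt_min; apply/andP; split; [lra|rewrite divr_gt0].
move=> D cD; rewrite lt_min => /andP[dl1 dle].
have hD : forall t, 0 <= t -> t <= 1 -> `|D t| <= supnorm01 D by move=> t t0 t1; exact: supnorm_ge.
have d0 := supnorm_ge0 cD.
have dl1' : supnorm01 D <= 1/4 by exact: ltW.
have dl2 : supnorm01 D <= 1/2 by lra.
have fa := frechet_alg Zx0 ZxZ1 Z1p d0 dl1' (A_bnd ce cD hD x0 x1) (A_bnd ce cD hD ler01 (lexx _))
  (Rrem_bnd ce cD hD dl2 x0 x1) (Rrem_bnd ce cD hD dl2 ler01 (lexx _)).
rewrite /phi (N_decomp ce cD x0 x1) (N_decomp ce cD ler01 (lexx _)) dphiE /phi.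
apply: le_trans fa _.
rewrite expr2 mulrA ler_wpM2r //.
have : supnorm01 D * 14 < e by rewrite -ltr_pdivlMr.
lra.
Qed.

End Eta.

Section Part2.
Context {R : realType}.
Notation mu := (@lebesgue_measure R).
Implicit Types (f g h eta D : R -> R).

Lemma integ_id (x : R) : 0 <= x -> integ 0 x (fun s => s) = x ^+ 2 / 2.
Proof.
rewrite le_eqVlt => /predU1P[<-|x0]; first by rewrite integ00 expr0n /= mul0r.
pose F : R -> R := (2^-1) *: ((@id R) * (@id R)).
have dF : forall s : R, is_derive s (1 : R) F s.
  move=> s; have h := is_deriveZ (2^-1) (is_deriveM (@is_derive_id _ _ s 1) (@is_derive_id _ _ s 1)).
  apply: is_derive_eq h _.
  by rewrite /= !scaler1 -[_ *: _]/(2^-1 * (s + s)); field.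
have cF : continuous F.
  move=> s; apply: differentiable_continuous; apply/derivable1_diffP.
  by case: (dF s).
have cid : {within `[0, x], continuous (fun s : R => s)}.
  by apply: continuous_subspaceT => y; exact: cvg_id.
have h := @continuous_FTC2 R (fun s => s) F 0 x x0 cid _ _.
rewrite /integ /Rintegral h.
- have E : forall y : R, F y = 2^-1 * (y * y) by [].
  by rewrite !E expr2 -EFinB /=; field.
- split.
  + by move=> y _; case: (dF y).
  + exact/cvg_at_right_filter/cF.
  + exact/cvg_at_left_filter/cF.
- by move=> y _; rewrite derive1E; case: (dF y).
Qed.

Lemma cont_interior f (t : R) : cont01 f -> 0 < t -> t < 1 -> {for t, continuous f}.
Proof.
move=> cf t0 t1; have [h _ _] := (continuous_within_itvP f ltr01).1 cf.
by apply: h; rewrite in_itv /= t0 t1.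
Qed.

Lemma FTC_at f (t : R) : cont01 f -> 0 < t -> t < 1 -> is_derive t 1 (fun y => integ 0 y f) (f t).
Proof.
move=> cf t0 t1.
have [d e] := @continuous_FTC1_closed R f 0 t 1 t1 (integ_int cf ler01 (lexx _)) t0 (cont_interior cf t0 t1).
by apply: DeriveDef => //; rewrite -derive1E.
Qed.

Lemma g_derive eta (t : R) : cont01 eta -> 0 < t -> t < 1 ->
  is_derive t 1 (expint eta) (expint eta t * eta t).
Proof.
move=> ce t0 t1.
have h := is_derive1_comp (is_derive_expR (integ 0 t eta)) (FTC_at ce t0 t1).
exact: h.
Qed.

Lemma d1phi eta (t : R) : cont01 eta -> 0 < t -> t < 1 ->
  derive1 (phi eta) t = expint eta t / integ 0 1 (expint eta).
Proof.
move=> ce t0 t1; rewrite /phi derive1Mr; last by case: (FTC_at (g_cont ce) t0 t1).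
by rewrite derive1E; case: (FTC_at (g_cont ce) t0 t1) => _ ->.
Qed.

Lemma d2phi eta (t : R) : cont01 eta -> 0 < t -> t < 1 ->
  derive1 (derive1 (phi eta)) t = expint eta t * eta t / integ 0 1 (expint eta).
Proof.
move=> ce t0 t1.
rewrite derive1E (@near_eq_derive _ _ _ _ (fun y => expint eta y / integ 0 1 (expint eta))); last first.
  have : t \in `]0, 1[ by rewrite in_itv /= t0 t1.
  move/(@near_in_itvoo R 0 1); apply: filterS => y; rewrite in_itv /= => /andP[y0 y1].
  exact: d1phi.
rewrite -derive1E derive1Mr; last by case: (g_derive ce t0 t1).
by rewrite derive1E; case: (g_derive ce t0 t1) => _ ->.
Qed.

End Part2.

Section Part2b.
Context {R : realType}.
Notation mu := (@lebesgue_measure R).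
Implicit Types (f g h eta D : R -> R).

Lemma d2_small eta (eps c : R) : cont01 eta -> D2norm01 (phi eta) < eps -> 0 < c -> c < 1 ->
  `|expint eta c * eta c| <= eps * integ 0 1 (expint eta).
Proof.
move=> ce hD c0 c1; have Z1p := Z1_gt0 ce.
have cge : cont01 (fun t => expint eta t * eta t) by apply: cont01M => //; exact: g_cont.
have [M hM] := cont01_bnd cge.
have hub : has_ubound [set `|(derive1 (derive1 (phi eta))) t| | t in `]0 : R, 1[].
  exists (M / integ 0 1 (expint eta)) => y [t /= + <-]; rewrite in_itv /= => /andP[t0 t1].
  rewrite d2phi // normrM normfV (gtr0_norm Z1p) ler_pM2r ?invr_gt0 //.
  by apply: hM; exact: ltW.
have hc : `|(derive1 (derive1 (phi eta))) c| <= D2norm01 (phi eta).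
  by rewrite /D2norm01; apply: (@ub_le_sup R _ hub); exists c => //=; rewrite in_itv /= c0 c1.
move: hc; rewrite d2phi // normrM normfV (gtr0_norm Z1p) => hc.
have : `|expint eta c * eta c| / integ 0 1 (expint eta) < eps by apply: le_lt_trans hD.
by rewrite ltr_pdivrMr // => /ltW.
Qed.

Lemma g_near_g0 eta (eps t : R) : cont01 eta -> 0 < eps -> D2norm01 (phi eta) < eps -> 0 <= t -> t <= 1 ->
  `|expint eta t - expint eta 0| <= eps * integ 0 1 (expint eta).
Proof.
move=> ce ep hD; rewrite le_eqVlt => /predU1P[<-|t0] t1.
  by rewrite subrr normr0; apply: mulr_ge0; [exact: ltW|exact/ltW/Z1_gt0].
have hder : forall c, c \in `]0, t[ -> is_derive c 1 (expint eta) (expint eta c * eta c).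
  move=> c; rewrite in_itv /= => /andP[c0 ct]; apply: g_derive => //.
  exact: lt_le_trans t1.
have [c] := MVT t0 hder (cont01_sub (g_cont ce) (ltW t0) t1).
rewrite in_itv /= => /andP[c0 ct] ->.
have hs := d2_small ce hD c0 (lt_le_trans ct t1).
rewrite subr0 normrM (gtr0_norm t0); apply: le_trans (ler_wpM2r (ltW t0) hs) _.
rewrite ler_piMr //; apply: mulr_ge0; [exact: ltW|exact/ltW/Z1_gt0].
Qed.

Lemma g_bounds eta (eps t : R) : cont01 eta -> 0 < eps -> D2norm01 (phi eta) < eps -> 0 <= t -> t <= 1 ->
  (1 - 2 * eps) * integ 0 1 (expint eta) <= expint eta t <= (1 + 2 * eps) * integ 0 1 (expint eta).
Proof.
move=> ce ep hD t0 t1.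
set Z1 := integ 0 1 (expint eta); set g0 := expint eta 0.
have hb : forall s, 0 <= s -> s <= 1 -> g0 - eps * Z1 <= expint eta s <= g0 + eps * Z1.
  move=> s s0 s1; have := g_near_g0 ce ep hD s0 s1; rewrite ler_distl.
  by [].
have cg := g_cont ce.
have lo : integ 0 1 (fun _ => g0 - eps * Z1) <= Z1.
  apply: le_integ; [exact: cont01_cst|exact: cg|exact: ler01|exact: lexx|].
  by move=> s s0 s1; have /andP[] := hb s s0 s1.
have hi : Z1 <= integ 0 1 (fun _ => g0 + eps * Z1).
  apply: le_integ; [exact: cg|exact: cont01_cst|exact: ler01|exact: lexx|].
  by move=> s s0 s1; have /andP[] := hb s s0 s1.
rewrite integ_cst ?ler01 // mulr1 in lo; rewrite integ_cst ?ler01 // mulr1 in hi.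
have /andP[h1 h2] := hb t t0 t1.
apply/andP; split; lra.
Qed.

Lemma upper_alg (Zx Z1 Ax A1 : R) : 0 < Zx -> Zx <= Z1 -> `|Ax| <= Zx -> `|A1 - Ax| <= Z1 - Zx ->
  `|(Ax / Zx - A1 / Z1) * (Zx / Z1)| <= 2 * Num.min (Zx / Z1) (1 - Zx / Z1).
Proof.
move=> Zxp ZxZ1 hA hD; have Z1p : 0 < Z1 by exact: lt_le_trans ZxZ1.
have -> : (Ax / Zx - A1 / Z1) * (Zx / Z1) = (Ax / Z1) * (1 - Zx / Z1) - (Zx / Z1) * ((A1 - Ax) / Z1).
  by field; rewrite !lt0r_neq0.
set P := Zx / Z1.
have P0 : 0 <= P by rewrite divr_ge0 // ltW.
have P1 : P <= 1 by rewrite ler_pdivrMr // mul1r.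
have h1 : `|Ax / Z1| <= P by rewrite normrM normfV (gtr0_norm Z1p) ler_pM2r ?invr_gt0.
have h2 : `|(A1 - Ax) / Z1| <= 1 - P.
  rewrite normrM normfV (gtr0_norm Z1p) /P.
  have -> : 1 - Zx / Z1 = (Z1 - Zx) / Z1 by field; rewrite lt0r_neq0.
  by rewrite ler_pM2r ?invr_gt0.
have m : P * (1 - P) <= Num.min P (1 - P).
  by rewrite le_min; apply/andP; split; nra.
apply: le_trans (ler_normB _ _) _.
have P1' : 0 <= 1 - P by rewrite subr_ge0.
have n1 : `|Ax / Z1 * (1 - P)| = `|Ax / Z1| * (1 - P) by rewrite normrM (ger0_norm P1').
have n2 : `|P * ((A1 - Ax) / Z1)| = P * `|(A1 - Ax) / Z1| by rewrite normrM (ger0_norm P0).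
rewrite n1 n2.
have e1 : `|Ax / Z1| * (1 - P) <= P * (1 - P) by apply: ler_wpM2r; rewrite ?subr_ge0.
have e2 : P * `|(A1 - Ax) / Z1| <= P * (1 - P) by apply: ler_wpM2l.
lra.
Qed.

Lemma lower_alg (Zx Z1 Ax A1 x e : R) : 0 < x -> x <= 1 -> 0 <= e -> e <= 1/100 -> 0 < Z1 ->
  (1 - 2 * e) * Z1 * x <= Zx -> Zx <= (1 + 2 * e) * Z1 * x ->
  Z1 - Zx <= (1 + 2 * e) * Z1 * (1 - x) -> Zx <= Z1 ->
  0 <= Ax -> Ax <= (1 + 2 * e) * Z1 * (x ^+ 2 / 2) ->
  (1 - 2 * e) * Z1 * ((1 - x ^+ 2) / 2) <= A1 - Ax ->
  (1/8) * Num.min (Zx / Z1) (1 - Zx / Z1) <= `|(Ax / Zx - A1 / Z1) * (Zx / Z1)|.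
Proof.
move=> x0 x1 e0 e1 Z1p hz1 hz2 hz3 hz4 ha0 ha1 ha2.
have Zxp : 0 < Zx.
  apply: lt_le_trans hz1; apply: mulr_gt0 => //; apply: mulr_gt0 => //; lra.
have -> : (Ax / Zx - A1 / Z1) * (Zx / Z1) = Ax / Z1 - (A1 / Z1) * (Zx / Z1).
  by field; rewrite !lt0r_neq0.
set z := Zx / Z1; set a := Ax / Z1; set a1 := A1 / Z1.
have dv : forall u v : R, (u <= v) = (u / Z1 <= v / Z1) by move=> u v; rewrite ler_pM2r ?invr_gt0.
have q1 : (1 - 2 * e) * x <= z by move: hz1; rewrite dv /z; have -> : (1 - 2 * e) * Z1 * x / Z1 = (1 - 2 * e) * x by field; rewrite lt0r_neq0.
have q2 : z <= (1 + 2 * e) * x by move: hz2; rewrite dv /z; have -> : (1 + 2 * e) * Z1 * x / Z1 = (1 + 2 * e) * x by field; rewrite lt0r_neq0.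
have q3 : 1 - z <= (1 + 2 * e) * (1 - x).
  move: hz3; rewrite dv /z; have -> : (Z1 - Zx) / Z1 = 1 - Zx / Z1 by field; rewrite lt0r_neq0.
  by have -> : (1 + 2 * e) * Z1 * (1 - x) / Z1 = (1 + 2 * e) * (1 - x) by field; rewrite lt0r_neq0.
have q4 : z <= 1 by rewrite /z ler_pdivrMr // mul1r.
have q5 : 0 <= a by rewrite /a divr_ge0 // ltW.
have q6 : a <= (1 + 2 * e) * (x ^+ 2 / 2).
  move: ha1; rewrite dv /a; have -> : (1 + 2 * e) * Z1 * (x ^+ 2 / 2) / Z1 = (1 + 2 * e) * (x ^+ 2 / 2) by field; rewrite lt0r_neq0.
  by [].
have q7 : (1 - 2 * e) * ((1 - x ^+ 2) / 2) <= a1 - a.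
  move: ha2; rewrite dv /a /a1; have -> : (A1 - Ax) / Z1 = A1 / Z1 - Ax / Z1 by field; rewrite lt0r_neq0.
  by have -> : (1 - 2 * e) * Z1 * ((1 - x ^+ 2) / 2) / Z1 = (1 - 2 * e) * ((1 - x ^+ 2) / 2) by field; rewrite lt0r_neq0.
have z0 : 0 <= z by rewrite /z divr_ge0 // ltW.
have s3 : a - a1 * z = - (z * (a1 - a) - a * (1 - z)) by ring.
rewrite s3 normrN.
have s1 : (1 - 2 * e) * x * ((1 - 2 * e) * ((1 - x ^+ 2) / 2)) <= z * (a1 - a).
  apply: ler_pM => //; [apply: mulr_ge0; [lra|exact: ltW]|apply: mulr_ge0; [lra|]].
  by rewrite divr_ge0 // subr_ge0 expr_le1 // ltW.
have s2 : a * (1 - z) <= (1 + 2 * e) * (x ^+ 2 / 2) * ((1 + 2 * e) * (1 - x)).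
  by apply: ler_pM => //; lra.
have s4 : Num.min z (1 - z) <= 2 * (1 + 2 * e) * (x * (1 - x)).
  have [xh|xh] := lerP x (1/2).
    rewrite ge_min; apply/orP; left; apply: le_trans q2 _; nra.
  rewrite ge_min; apply/orP; right; apply: le_trans q3 _; nra.
have k : (1 + 2 * e) / 2 <= (1 - 2 * e) ^+ 2 * (1 + x) - (1 + 2 * e) ^+ 2 * x by nra.
have xx : 0 <= x * (1 - x) by apply: mulr_ge0; lra.
have k2 := ler_wpM2r xx k.
have E1 : (1 - 2 * e) * x * ((1 - 2 * e) * ((1 - x ^+ 2) / 2)) - (1 + 2 * e) * (x ^+ 2 / 2) * ((1 + 2 * e) * (1 - x))
  = ((1 - 2 * e) ^+ 2 * (1 + x) - (1 + 2 * e) ^+ 2 * x) * (x * (1 - x)) / 2 by field.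
have E2 : 1 / 8 * (2 * (1 + 2 * e) * (x * (1 - x))) = (1 + 2 * e) / 2 * (x * (1 - x)) / 2 by field.
have : 0 <= z * (a1 - a) - a * (1 - z) by nra.
move=> hpos; rewrite ger0_norm //.
lra.
Qed.

End Part2b.

Section Part2c.
Context {R : realType}.
Notation mu := (@lebesgue_measure R).
Implicit Types (f g h eta D : R -> R).

Lemma dphi_upper eta (x : R) D : cont01 eta -> 0 <= x -> x <= 1 -> cont01 D -> supnorm01 D <= 1 ->
  `|dphi eta x D| <= 2 * Num.min (phi eta x) (1 - phi eta x).
Proof.
move=> ce x0 x1 cD hs.
have hD : forall t, 0 <= t -> t <= 1 -> `|D t| <= 1.
  by move=> t t0 t1; apply: le_trans hs; exact: supnorm_ge.
have hA := A_bnd ce cD hD x0 x1; have hdf := A_diff ce cD hD x0 x1.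
rewrite mul1r in hA; rewrite mul1r in hdf.
have Zx0 := Z_ge0 eta x; have ZxZ1 := Z_le ce x0 x1; have Z1p := Z1_gt0 ce.
rewrite dphiE /phi.
have [Ze|Zn] := eqVneq (integ 0 x (expint eta)) 0.
  rewrite Ze mul0r mulr0 normr0 subr0; apply: mulr_ge0 => //.
apply: upper_alg => //; by rewrite lt_neqAle eq_sym Zn Zx0.
Qed.

Lemma A_one eta (y : R) : 0 <= y -> y <= 1 ->
  Aint eta (fun _ => 1) y = integ 0 y (fun s => s * expint eta s).
Proof.
move=> y0 y1; rewrite /Aint; apply: integ_ext => t t0 ty.
by rewrite integ_cst // mul1r.
Qed.

Lemma dphi_lower eta (x eps : R) : cont01 eta -> 0 <= x -> x <= 1 -> 0 < eps -> eps <= 1/100 ->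
  D2norm01 (phi eta) < eps ->
  (1/8) * Num.min (phi eta x) (1 - phi eta x) <= `|dphi eta x (fun _ => 1)|.
Proof.
move=> ce; rewrite le_eqVlt => /predU1P[<-|x0] x1 ep e1 hD.
  rewrite /phi integ00 mul0r subr0; apply: le_trans (normr_ge0 _).
  have -> : Num.min (0:R) 1 = 0 by apply/eqP; rewrite eq_le ge_min lexx le_min lexx ler01.
  by rewrite mulr0.
have x0' := ltW x0.
have cg := g_cont ce; have Z1p := Z1_gt0 ce.
set Z1 := integ 0 1 (expint eta).
have gb := g_bounds ce ep hD.
have csg : cont01 (fun s => s * expint eta s) by apply: cont01M => //; exact: cont01_id.
rewrite dphiE /phi (A_one eta x0' x1) (A_one eta ler01 (lexx _)).
apply: (@lower_alg _ _ _ _ _ x eps) => //; first exact: ltW.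
- have h : integ 0 x (fun _ => (1 - 2 * eps) * Z1) <= integ 0 x (expint eta).
    apply: le_integ => //; [exact: cont01_cst|].
    by move=> t t0 tx; have /andP[] := gb t t0 (le_trans tx x1).
  by rewrite integ_cst // in h.
- have h : integ 0 x (expint eta) <= integ 0 x (fun _ => (1 + 2 * eps) * Z1).
    apply: le_integ => //; [exact: cont01_cst|].
    by move=> t t0 tx; have /andP[] := gb t t0 (le_trans tx x1).
  by rewrite integ_cst // in h.
- have ch : cont01 (fun s => (1 + 2 * eps) * Z1 - expint eta s) by apply: cont01D; [exact: cont01_cst|exact: cont01N].
  have hp : forall t, 0 <= t -> t <= 1 -> 0 <= (1 + 2 * eps) * Z1 - expint eta t.
    by move=> t t0 t1; have /andP[_ ] := gb t t0 t1; rewrite subr_ge0.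
  have h := integ_mono ch x0' x1 hp.
  rewrite (integB (@cont01_cst R ((1 + 2 * eps) * Z1)) cg x0' x1) (integB (@cont01_cst R ((1 + 2 * eps) * Z1)) cg ler01 (lexx _)) !integ_cst // in h.
  rewrite mulr1 in h; rewrite mulrBr mulr1; rewrite /Z1 in h *; lra.
- exact: Z_le.
- by apply: integ_ge0 => t t0 _; rewrite mulr_ge0 // ltW // g_pos.
- have cs : cont01 (fun s => (1 + 2 * eps) * Z1 * s) by apply: cont01M; [exact: cont01_cst|exact: cont01_id].
  have h : integ 0 x (fun s => s * expint eta s) <= integ 0 x (fun s => (1 + 2 * eps) * Z1 * s).
    apply: le_integ => // t t0 tx; rewrite mulrC ler_wpM2r //.
    by have /andP[] := gb t t0 (le_trans tx x1).
  by rewrite (integZ _ cont01_id x0' x1) integ_id // in h.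
- set c := (1 - 2 * eps) * Z1.
  have cs : cont01 (fun s => c * s) by apply: cont01M; [exact: cont01_cst|exact: cont01_id].
  have ch : cont01 (fun s => s * expint eta s - c * s) by apply: cont01D => //; exact: cont01N.
  have hp : forall t, 0 <= t -> t <= 1 -> 0 <= t * expint eta t - c * t.
    move=> t t0 t1; rewrite [c * t]mulrC -mulrBr mulr_ge0 // subr_ge0.
    by have /andP[] := gb t t0 t1.
  have h := integ_mono ch x0' x1 hp.
  rewrite (integB csg cs x0' x1) (integB csg cs ler01 (lexx _)) in h.
  rewrite (integZ _ cont01_id x0' x1) (integZ _ cont01_id ler01 (lexx _)) !integ_id ?ler01 // expr1n in h.
  lra.
Qed.

Lemma supnorm_cst_le (c : R) : supnorm01 (fun _ => c) <= `|c|.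
Proof.
apply: ge_sup; first by exists `|c|, 0 => //=; rewrite in_itv /= lexx ler01.
by move=> y [t _ <-].
Qed.

Lemma opnorm_le eta (x B : R) : (forall D, cont01 D -> supnorm01 D <= 1 -> `|dphi eta x D| <= B) ->
  opnorm01 (dphi eta x) <= B.
Proof.
move=> hB; apply: ge_sup.
  exists `|dphi eta x (fun _ => 0)|, (fun _ => 0) => //; split; first exact: cont01_cst.
  by apply: le_trans (supnorm_cst_le 0) _; rewrite normr0 ler01.
by move=> y [D [cD hD] <-]; exact: hB.
Qed.

Lemma opnorm_ge eta (x B : R) D : (forall D, cont01 D -> supnorm01 D <= 1 -> `|dphi eta x D| <= B) ->
  cont01 D -> supnorm01 D <= 1 -> `|dphi eta x D| <= opnorm01 (dphi eta x).
Proof.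
move=> hB cD hD; apply: (@ub_le_sup R _ _); last by exists D.
by exists B => y [D' [cD' hD'] <-]; exact: hB.
Qed.

End Part2c.

Unset Implicit Arguments.

Theorem mainTheorem5 (R : realType) (x : R) (hx0 : 0 <= x) (hx1 : x <= 1) :
  (forall eta : R -> R, cont01 eta ->
     (* dphi eta x is a linear functional on C^0([0,1]) ... *)
     (forall (a : R) (D1 D2 : R -> R), cont01 D1 -> cont01 D2 ->
        dphi eta x (fun t => a * D1 t + D2 t) = a * dphi eta x D1 + dphi eta x D2) /\
     (* ... which is bounded ... *)
     (exists C : R, forall D : R -> R, cont01 D ->
        `|dphi eta x D| <= C * supnorm01 D) /\
     (* ... and is the Frechet derivative of E at eta *)
     (forall e : R, 0 < e -> exists d : R, 0 < d /\
        forall D : R -> R, cont01 D -> supnorm01 D < d ->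
          `|phi (fun t => eta t + D t) x - phi eta x - dphi eta x D|
            <= e * supnorm01 D)) /\
  (exists eps0 : R, 0 < eps0 /\
     forall eps : R, 0 < eps -> eps < eps0 ->
     forall eta : R -> R, cont01 eta ->
       D2norm01 (phi eta) < eps ->
       (1 / 8) * Num.min (phi eta x) (1 - phi eta x) <= opnorm01 (dphi eta x) /\
       opnorm01 (dphi eta x) <= 2 * Num.min (phi eta x) (1 - phi eta x)).
Proof.
split; first by move=> eta ce; exact: part1.
exists (1/100); split; first lra.
move=> eps e0 e1 eta ce hD.
have hB : forall D, cont01 D -> supnorm01 D <= 1 ->
    `|dphi eta x D| <= 2 * Num.min (phi eta x) (1 - phi eta x).
  by move=> D cD hs; exact: dphi_upper.
split; last exact: opnorm_le.
apply: le_trans (dphi_lower ce hx0 hx1 e0 (ltW e1) hD) _.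
apply: opnorm_ge hB _ _; first exact: cont01_cst.
by apply: le_trans (supnorm_cst_le 1) _; rewrite normr1.
Qed.
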